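(* Up to multiplication by a positive integer, every basic weight of a basic system of type $G_2$ is one of the following (coordinates $\lambda_k=\langle\lambda,e_k\rangle$): (1) $(G_2,1,1)$: $(-1,1,0)$, $(-1,0,1)$; (2) $(G_2,1,2)$: $(-1,2,-1)$, $(-1,-1,2)$, $(-2,1,1)$; (3) $(G_2,2,1)$: $(1,0,-1)$, $(1,-1,0)$, $(0,-1,1)$; (4) $(G_2,2,2)$: $(1,-2,1)$, $(2,-1,-1)$.
   Context: $G_2$ is realized in the plane $\{x_1+x_2+x_3=0\}$ of $\mathbb R^3$ with orthonormal basis $e_1,e_2,e_3$ and standard inner product, simple roots $\alpha_1=e_1-e_2$, $\alpha_2=-2e_1+e_2+e_3$. Let $W$ be the Weyl group, $\alpha^\vee=2\alpha/\langle\alpha,\alpha\rangle$. A weight is integral if $\langle\lambda,\alpha^\vee\rangle\in\mathbb Z$ for all roots $\alpha$; $\overline\lambda$ is the dominant weight in $W\lambda$. For $I=\Delta\setminus\{\alpha_i\}$, $J=\Delta\setminus\{\alpha_j\}$, a basic weight of $(\Phi,i,j)$ is an integral $\lambda$ with $\langle\lambda,\alpha^\vee\rangle\in\mathbb Z_{>0}$ for all $\alpha\in I$ and $\{\alpha\in\Delta:\langle\overline\lambda,\alpha\rangle=0\}=J$; $(\Phi,i,j)$ is a basic system if it has a basic weight. *)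

(* Defs.v *)
From HB Require Import structures.
From mathcomp Require Import all_boot all_order all_algebra.
From mathcomp Require Import reals.
Set Implicit Arguments. Unset Strict Implicit. Unset Printing Implicit Defensive.
Import Order.TTheory GRing.Theory Num.Theory.
Local Open Scope ring_scope.

Section G2.
Variable R : realType.

(* vector with coordinates (a,b,c) w.r.t. the orthonormal basis e1,e2,e3 *)
Definition mkv (a b c : R) : 'rV[R]_3 := \row_(k < 3) nth 0 [:: a; b; c] k.

Definition dot (u v : 'rV[R]_3) : R := \sum_(k < 3) u 0 k * v 0 k.

Definition copair (v a : 'rV[R]_3) : R := dot v (2 / dot a a *: a).

(* the plane x1+x2+x3 = 0 (the ambient space of the G2 weights) *)
Definition in_plane (v : 'rV[R]_3) : Prop := v 0 0 + v 0 1 + v 0 2 = 0.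

Definition alpha1 : 'rV[R]_3 := mkv 1 (-1) 0.
Definition alpha2 : 'rV[R]_3 := mkv (-2) 1 1.
Definition simple_root (k : nat) : 'rV[R]_3 := if k == 1%N then alpha1 else alpha2.

Definition refl (a v : 'rV[R]_3) : 'rV[R]_3 := v - copair v a *: a.

(* Weyl group W = group generated by the simple reflections; an element of W is
   represented by a word in the simple reflections (true -> s_alpha1, false -> s_alpha2) *)
Definition weyl_act (w : seq bool) (v : 'rV[R]_3) : 'rV[R]_3 :=
  foldr (fun b x => refl (if b then alpha1 else alpha2) x) v w.

Definition in_orbit (lam mu : 'rV[R]_3) : Prop := exists w : seq bool, mu = weyl_act w lam.

Definition is_root (a : 'rV[R]_3) : Prop :=
  exists k, (k == 1%N) || (k == 2%N) /\ in_orbit (simple_root k) a.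

Definition integral (lam : 'rV[R]_3) : Prop :=
  forall a, is_root a -> copair lam a \is a Num.int.

Definition dominant (mu : 'rV[R]_3) : Prop :=
  forall k, (k == 1%N) || (k == 2%N) -> 0 <= dot mu (simple_root k).

Definition is_bar (lam mu : 'rV[R]_3) : Prop := in_orbit lam mu /\ dominant mu.

(* basic weight of (G2, i, j), with I = Delta \ {alpha_i}, J = Delta \ {alpha_j} *)
Definition basic_weight (i j : nat) (lam : 'rV[R]_3) : Prop :=
  [/\ in_plane lam, integral lam,
      (forall k, (k == 1%N) || (k == 2%N) -> k != i ->
          copair lam (simple_root k) \is a Num.int /\ 0 < copair lam (simple_root k))
    & exists mu, is_bar lam mu /\
        (forall k, (k == 1%N) || (k == 2%N) ->
           (dot mu (simple_root k) == 0) = (k != j))].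

Definition basic_list (i j : nat) : seq 'rV[R]_3 :=
  match i, j with
  | 1, 1 => [:: mkv (-1) 1 0; mkv (-1) 0 1]
  | 1, 2 => [:: mkv (-1) 2 (-1); mkv (-1) (-1) 2; mkv (-2) 1 1]
  | 2, 1 => [:: mkv 1 0 (-1); mkv 1 (-1) 0; mkv 0 (-1) 1]
  | 2, 2 => [:: mkv 1 (-2) 1; mkv 2 (-1) (-1)]
  | _, _ => [::]
  end%N.

End G2.

(* Main.v *)
Require Import Defs.
From HB Require Import structures.
From mathcomp Require Import all_boot all_order all_algebra.
From mathcomp Require Import reals.
From mathcomp Require Import ring lra.
Set Implicit Arguments. Unset Strict Implicit.
Import Order.TTheory GRing.Theory Num.Theory.
Local Open Scope ring_scope.

Section H.
Variable R : realType.
Implicit Types a b c x y z d e f t : R.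

Lemma mkvE a b c (k : 'I_3) : mkv a b c 0 k = nth 0 [:: a; b; c] k.
Proof. by rewrite /mkv mxE. Qed.

Lemma vE (v : 'rV[R]_3) : v = mkv (v 0 0) (v 0 1) (v 0 2).
Proof.
apply/rowP => k; rewrite mkvE; case: k => [[|[|[|k]]] Hk] //=;
  rewrite ?ord1; do ?congr (v _ _); apply: val_inj => //.
Qed.

Lemma mkv_eq a b c d e f : a = d -> b = e -> c = f -> mkv a b c = mkv d e f.
Proof. by move=> -> -> ->. Qed.

Lemma mkv_inj a b c d e f : mkv a b c = mkv d e f -> [/\ a = d, b = e & c = f].
Proof.
move=> H; have := congr1 (fun v : 'rV[R]_3 => v 0 0) H;
have := congr1 (fun v : 'rV[R]_3 => v 0 1) H;
have := congr1 (fun v : 'rV[R]_3 => v 0 2) H; rewrite /= !mkvE /=.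
by [].
Qed.

Lemma dotE a b c d e f : dot (mkv a b c) (mkv d e f) = a*d + b*e + c*f.
Proof. by rewrite /dot !big_ord_recr big_ord0 /= !mkvE /= add0r. Qed.

Lemma scaleE t a b c : t *: mkv a b c = mkv (t*a) (t*b) (t*c).
Proof. apply/rowP => k; rewrite !mxE; case: k => [[|[|[|k]]] Hk] //=. Qed.

Lemma addE a b c d e f : mkv a b c - mkv d e f = mkv (a-d) (b-e) (c-f).
Proof. apply/rowP => k; rewrite !mxE; case: k => [[|[|[|k]]] Hk] //=; by rewrite subr0. Qed.

Lemma copairE a b c d e f : copair (mkv a b c) (mkv d e f) =
  (a*d + b*e + c*f) * (2 / (d*d + e*e + f*f)).
Proof. by rewrite /copair scaleE dotE dotE; ring. Qed.

Lemma refl1 x y z : refl (alpha1 R) (mkv x y z) = mkv y x z.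
Proof. rewrite /refl /alpha1 copairE scaleE addE; apply: mkv_eq; by field. Qed.

Lemma refl2 x y z : x + y + z = 0 -> refl (alpha2 R) (mkv x y z) = mkv (-x) (-z) (-y).
Proof.
move=> h; have -> : x = -y-z by lra.
rewrite /refl /alpha2 copairE scaleE addE; apply: mkv_eq; by field.
Qed.


Definition SP a b c x y z : Prop :=
  (x = a /\ y = b /\ z = c) \/
  (x = a /\ y = c /\ z = b) \/
  (x = b /\ y = a /\ z = c) \/
  (x = b /\ y = c /\ z = a) \/
  (x = c /\ y = a /\ z = b) \/
  (x = c /\ y = b /\ z = a) \/
  (x = -a /\ y = -b /\ z = -c) \/
  (x = -a /\ y = -c /\ z = -b) \/
  (x = -b /\ y = -a /\ z = -c) \/
  (x = -b /\ y = -c /\ z = -a) \/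
  (x = -c /\ y = -a /\ z = -b) \/
  (x = -c /\ y = -b /\ z = -a).

Ltac pick := first [ left; split; [ring|split; ring] | right; pick | split; [ring|split;ring] ].
Ltac destr := repeat match goal with H: _ \/ _ |- _ => destruct H | H: _ /\ _ |- _ => destruct H end.

Lemma orbit a b c w : a + b + c = 0 ->
  exists x y z, weyl_act w (mkv a b c) = mkv x y z /\ x + y + z = 0 /\ SP a b c x y z.
Proof.
move=> h; elim: w => [|bt w [x [y [z [IH [hs hsp]]]]]].
  exists a, b, c; split => //; split => //; rewrite /SP; pick.
rewrite /weyl_act /= -/(weyl_act w _) IH; case: bt.
  exists y, x, z; rewrite refl1; split => //; split; first lra.
  rewrite /SP in hsp *; destr; subst; pick.
exists (-x), (-z), (-y); rewrite refl2 //; split => //; split; first lra.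
rewrite /SP in hsp *; destr; subst; pick.
Qed.


Lemma fin (s : seq 'rV[R]_3) (lam m : 'rV[R]_3) t : m \in s -> 0 < t -> t \is a Num.int ->
  lam = t *: m ->
  exists (n : nat) (mu : 'rV[R]_3), (0 < n)%N /\ mu \in s /\ lam = n%:R *: mu.
Proof.
move=> hm ht hi ->; rewrite intrEge0 ?ltW // in hi; case/natrP: hi => n hn.
exists n, m; split; last by rewrite hn.
by rewrite -(ltr0n R) -hn.
Qed.

Lemma copair_a2 a b c : a + b + c = 0 -> copair (mkv a b c) (alpha2 R) = - a.
Proof. move=> h; have -> : a = -b-c by lra. rewrite copairE; by field. Qed.

Lemma copair_a1 a b c : copair (mkv a b c) (alpha1 R) = a - b.
Proof. rewrite copairE; by field. Qed.

Lemma copair_b a b c : a + b + c = 0 -> copair (mkv a b c) (mkv 1 (-2) 1) = - b.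
Proof. move=> h; have -> : a = -b-c by lra. rewrite copairE; by field. Qed.

Lemma root_b : is_root (mkv 1 (-2) 1 : 'rV[R]_3).
Proof.
exists 2%N; split => //; exists [:: true]; rewrite /= /simple_root /= /alpha2 refl1 //.
Qed.

Lemma pos_of (x : R) : (x == 0) = false -> 0 <= x -> 0 < x.
Proof. by move=> h1 h2; rewrite lt0r h1. Qed.

Lemma root_a2 : is_root (alpha2 R).
Proof. by exists 2%N; split => //; exists [::]. Qed.

End H.

Ltac destr := repeat match goal with H: _ \/ _ |- _ => destruct H | H: _ /\ _ |- _ => destruct H end.

Ltac tryt m t :=
  solve [apply: (@fin _ _ _ m t); [by rewrite /= !inE eqxx ?orbT | lra | rewrite ?rpredN; assumption | rewrite scaleE; apply: mkv_eq; lra]].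

Ltac fin11 R a b c := first [ exfalso; lra | tryt (@mkv R (-1) 1 0) (-a) | tryt (@mkv R (-1) 0 1) (-a) ].
Ltac fin12 R a b c := first [ exfalso; lra | tryt (@mkv R (-1) 2 (-1)) (-a) | tryt (@mkv R (-1) (-1) 2) (-a) | tryt (@mkv R (-2) 1 1) b ].
Ltac fin21 R a b c := first [ exfalso; lra | tryt (@mkv R 1 0 (-1)) a | tryt (@mkv R 1 (-1) 0) a | tryt (@mkv R 0 (-1) 1) (-b) ].
Ltac fin22 R a b c := first [ exfalso; lra | tryt (@mkv R 1 (-2) 1) a | tryt (@mkv R 2 (-1) (-1)) (-b) ].

Theorem theorem5p13 (R : realType) (i j : nat) (lam : 'rV[R]_3) :
  (i == 1%N) || (i == 2%N) -> (j == 1%N) || (j == 2%N) ->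
  basic_weight i j lam ->
  exists (n : nat) (mu : 'rV[R]_3),
    (0 < n)%N /\ mu \in basic_list R i j /\ lam = n%:R *: mu.
Proof.
have [a [b [c ->]]] : exists a b c, lam = mkv a b c
  by exists (lam 0 0), (lam 0 1), (lam 0 2); exact: vE.
move=> hi hj [hp hint hk [mu [[[w hw] hdom] hj']]].
rewrite /in_plane !mkvE /= in hp.
have ia : a \is a Num.int.
  by rewrite -rpredN -(copair_a2 hp); apply: hint; apply: root_a2.
have ib : b \is a Num.int.
  by rewrite -rpredN -(copair_b hp); apply: hint; apply: root_b.
have ic : c \is a Num.int.
  have -> : c = - (a + b) by lra.
  by rewrite rpredN rpredD.
have [x [y [z [hmu [hs hsp]]]]] := orbit w hp.
rewrite hmu in hw; subst mu.
have d1 := hdom 1%N isT; have d2 := hdom 2%N isT.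
have e1 := hj' 1%N isT; have e2 := hj' 2%N isT.
rewrite /simple_root /= /alpha1 /alpha2 !dotE in d1 d2 e1 e2.
case/orP: hi => /eqP ?; subst i.
  have [_ k2] := hk 2%N isT isT.
  rewrite /simple_root /= copair_a2 // in k2.
  case/orP: hj => /eqP ?; subst j.
    move: e1 e2 => /= e1 /eqP e2; have s1 := pos_of e1 d1.
    rewrite /SP in hsp; destr; subst; clear hint hk hdom hj' hmu; fin11 R a b c.
  move: e1 e2 => /= /eqP e1 e2; have s2 := pos_of e2 d2.
  rewrite /SP in hsp; destr; subst; clear hint hk hdom hj' hmu; fin12 R a b c.
have [_ k1] := hk 1%N isT isT.
rewrite /simple_root /= copair_a1 // in k1.
case/orP: hj => /eqP ?; subst j.
  move: e1 e2 => /= e1 /eqP e2; have s1 := pos_of e1 d1.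
  rewrite /SP in hsp; destr; subst; clear hint hk hdom hj' hmu; fin21 R a b c.
move: e1 e2 => /= /eqP e1 e2; have s2 := pos_of e2 d2.
rewrite /SP in hsp; destr; subst; clear hint hk hdom hj' hmu; fin22 R a b c.
Qed.
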